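(* Let $a,b$ be nonzero complex constants and let $P,Q$ be arbitrary functions (or bilateral formal series) of one variable. Each of the following pairs $(f,g)$ satisfies $f\perp g$: (i) $f(x,y)=P(x)+yQ(x)$, $g(x,y)=x-y$; (ii) $f(x,y)=(1-axy)\big(1-b\frac{x}{y}\big)$, $g(x,y)=(x-y)\big(1-\frac{b}{axy}\big)$; (iii) $f(x,y)=(x+y)\big(x+\frac{b}{ay}\big)$, $g(x,y)=(x-y)\big(1-\frac{b}{axy}\big)$.
   Context: For functions (or bilateral formal series) $f,g$ of two variables, $f\perp g$ means $g(u,v)f(z,w)-g(u,w)f(z,v)+g(v,w)f(z,u)=0$ identically in $u,v,w,z$. *)

(* Defs.v *)
From HB Require Import structures.
From mathcomp Require Import all_boot all_order all_algebra.
Set Implicit Arguments. Unset Strict Implicit. Unset Printing Implicit Defensive.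
Import Order.TTheory GRing.Theory Num.Theory.
Local Open Scope ring_scope.

Definition perp_on (F : ringType) (D : pred F) (f g : F -> F -> F) : Prop :=
  forall u v w z, D u -> D v -> D w -> D z ->
    g u v * f z w - g u w * f z v + g v w * f z u = 0.

(* Main.v *)
Require Import Defs.
From HB Require Import structures.
From mathcomp Require Import all_boot all_order all_algebra.
From mathcomp Require Import ring.
Import Order.TTheory GRing.Theory Num.Theory.
Local Open Scope ring_scope.

Theorem corollary2p3 (C : numClosedFieldType) (a b : C) (P Q : C -> C) :
  a != 0 -> b != 0 ->
  [/\ perp_on predT (fun x y => P x + y * Q x) (fun x y => x - y),
      perp_on (fun x => x != 0)
        (fun x y => (1 - a * x * y) * (1 - b * (x / y)))
        (fun x y => (x - y) * (1 - b / (a * x * y)))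
    & perp_on (fun x => x != 0)
        (fun x y => (x + y) * (x + b / (a * y)))
        (fun x y => (x - y) * (1 - b / (a * x * y)))].
Proof.
move=> ha hb; split.
- move=> u v w z _ _ _ _; ring.
- move=> u v w z hu hv hw hz; field; by rewrite hu hv hw ha.
- move=> u v w z hu hv hw hz; field; by rewrite hu hv hw ha.
Qed.
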